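(* For every $\phi\in\mathcal{L}_{\Box\!\!\rightarrow}$ and every $(\Gamma,\Delta)\in W_c$: (1) $\mathcal{M}_c,(\Gamma,\Delta)\models^+\phi$ iff $\phi\in\Gamma$; (2) $\mathcal{M}_c,(\Gamma,\Delta)\models^-\phi$ iff $\sim\phi\in\Gamma$.
   Context: $\mathcal{L}_{\Box\!\!\rightarrow}$ is built from propositional variables with $\wedge,\vee,\to$, strong negation $\sim$, and a binary would-conditional $\Box\!\!\rightarrow$; $\phi\Diamond\!\!\rightarrow\psi$ abbreviates $\sim(\phi\Box\!\!\rightarrow\sim\psi)$. Abbreviations: $\leftrightarrow$ is mutual $\to$; $\phi\Rightarrow\psi:=(\phi\to\psi)\wedge(\sim\psi\to\sim\phi)$; $\phi\Leftrightarrow\psi:=(\phi\Rightarrow\psi)\wedge(\psi\Rightarrow\phi)$. $\mathbb{N}4\mathbb{CK}$: modus ponens; positive intuitionistic schemes; $\sim\sim\phi\leftrightarrow\phi$, $\sim(\phi\wedge\psi)\leftrightarrow(\sim\phi\vee\sim\psi)$, $\sim(\phi\vee\psi)\leftrightarrow(\sim\phi\wedge\sim\psi)$, $\sim(\phi\to\psi)\leftrightarrow(\phi\wedge\sim\psi)$; (A1) $((\phi\Box\!\!\rightarrow\psi)\wedge(\phi\Box\!\!\rightarrow\chi))\Leftrightarrow(\phi\Box\!\!\rightarrow(\psi\wedge\chi))$; (A2) $(\sim(\phi\Box\!\!\rightarrow\psi)\wedge(\phi\Box\!\!\rightarrow\chi))\to\sim(\phi\Box\!\!\rightarrow(\psi\vee\sim\chi))$;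 (A3) $((\phi\Diamond\!\!\rightarrow\psi)\to(\phi\Box\!\!\rightarrow\chi))\to(\phi\Box\!\!\rightarrow(\psi\to\chi))$; (A4) $\phi\Box\!\!\rightarrow(\psi\to\psi)$; rules: from $\phi\Leftrightarrow\psi$ infer $(\phi\Box\!\!\rightarrow\chi)\Leftrightarrow(\psi\Box\!\!\rightarrow\chi)$; from $\phi\leftrightarrow\psi$ infer $(\chi\Box\!\!\rightarrow\phi)\leftrightarrow(\chi\Box\!\!\rightarrow\psi)$; from $\sim\phi\leftrightarrow\sim\psi$ infer $\sim(\chi\Box\!\!\rightarrow\phi)\leftrightarrow\sim(\chi\Box\!\!\rightarrow\psi)$. $\Gamma\vdash\Delta$ means some nonempty finite disjunction of members of $\Delta$ is derivable from $\Gamma$ and theorems by modus ponens; $(\Gamma,\Delta)$ is maximal iff $\Gamma\not\vdash\Delta$ and $\Gamma\cup\Delta=\mathcal{L}_{\Box\!\!\rightarrow}$. Canonical model $\mathcal{M}_c$: $W_c$ = maximal bi-sets; $(\Gamma_0,\Delta_0)\leq_c(\Gamma_1,\Delta_1)$ iff $\Gamma_0\subseteq\Gamma_1$; $((\Gamma_0,\Delta_0),(X,Y),(\Gamma_1,\Delta_1))\in R_c$ iff for some $\phi$: $X=\{(\Gamma,\Delta)\in W_c\mid\phi\in\Gamma\}$, $Y=\{(\Gamma,\Delta)\in W_c\mid\sim\phi\in\Gamma\}$, $\{\psi\mid\phi\Box\!\!\rightarrow\psi\in\Gamma_0\}\subseteq\Gamma_1$, $\{\sim(\phi\Box\!\!\rightarrow\psi)\mid\sim\psi\in\Gamma_1\}\subseteq\Gamma_0$;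 $V^+_c(p)=\{(\Gamma,\Delta)\mid p\in\Gamma\}$, $V^-_c(p)=\{(\Gamma,\Delta)\mid\sim p\in\Gamma\}$. Verification $\models^+$ / falsification $\models^-$: atoms by $V^\pm$; $\wedge$ verified iff both verified, falsified iff one falsified; $\vee$ dually; $\sim$ swaps $\models^+,\models^-$; $w\models^+\psi\to\chi$ iff for all $v\geq w$, $v\models^+\psi$ implies $v\models^+\chi$; $w\models^-\psi\to\chi$ iff $w\models^+\psi$ and $w\models^-\chi$; $w\models^+\psi\Box\!\!\rightarrow\chi$ iff for all $v\geq w$ and $u$ with $R_{\|\psi\|}(v,u)$, $u\models^+\chi$; $w\models^-\psi\Box\!\!\rightarrow\chi$ iff some $u$ has $R_{\|\psi\|}(w,u)$ and $u\models^-\chi$, where $\|\psi\|=(\{w\mid w\models^+\psi\},\{w\mid w\models^-\psi\})$. *)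

(* Defs.v *)
From Stdlib Require Import List.
Import ListNotations.

Inductive form : Type :=
| Var  : nat -> form
| And  : form -> form -> form
| Or   : form -> form -> form
| Imp  : form -> form -> form
| Neg  : form -> form              (* strong negation ~ *)
| Cond : form -> form -> form.

Definition Dia (p q : form) : form := Neg (Cond p (Neg q)).
Definition Iff (p q : form) : form := And (Imp p q) (Imp q p).
Definition SImp (p q : form) : form := And (Imp p q) (Imp (Neg q) (Neg p)).
Definition SIff (p q : form) : form := And (SImp p q) (SImp q p).

Inductive thm : form -> Prop :=
| ax_K  : forall p q, thm (Imp p (Imp q p))
| ax_S  : forall p q r, thm (Imp (Imp p (Imp q r)) (Imp (Imp p q) (Imp p r)))
| ax_A1 : forall p q, thm (Imp (And p q) p)
| ax_A2 : forall p q, thm (Imp (And p q) q)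
| ax_A3 : forall p q, thm (Imp p (Imp q (And p q)))
| ax_O1 : forall p q, thm (Imp p (Or p q))
| ax_O2 : forall p q, thm (Imp q (Or p q))
| ax_O3 : forall p q r, thm (Imp (Imp p r) (Imp (Imp q r) (Imp (Or p q) r)))
| ax_NN   : forall p, thm (Iff (Neg (Neg p)) p)
| ax_NAnd : forall p q, thm (Iff (Neg (And p q)) (Or (Neg p) (Neg q)))
| ax_NOr  : forall p q, thm (Iff (Neg (Or p q)) (And (Neg p) (Neg q)))
| ax_NImp : forall p q, thm (Iff (Neg (Imp p q)) (And p (Neg q)))
| ax_C1 : forall p q r,
    thm (SIff (And (Cond p q) (Cond p r)) (Cond p (And q r)))
| ax_C2 : forall p q r,
    thm (Imp (And (Neg (Cond p q)) (Cond p r)) (Neg (Cond p (Or q (Neg r)))))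
| ax_C3 : forall p q r,
    thm (Imp (Imp (Dia p q) (Cond p r)) (Cond p (Imp q r)))
| ax_C4 : forall p q, thm (Cond p (Imp q q))
| r_MP : forall p q, thm (Imp p q) -> thm p -> thm q
| r_RA : forall p q r, thm (SIff p q) -> thm (SIff (Cond p r) (Cond q r))
| r_RC : forall p q r, thm (Iff p q) -> thm (Iff (Cond r p) (Cond r q))
| r_RCN : forall p q r, thm (Iff (Neg p) (Neg q)) ->
                        thm (Iff (Neg (Cond r p)) (Neg (Cond r q))).

Inductive deriv (G : form -> Prop) : form -> Prop :=
| d_hyp : forall p, G p -> deriv G p
| d_thm : forall p, thm p -> deriv G p
| d_mp  : forall p q, deriv G (Imp p q) -> deriv G p -> deriv G q.

Fixpoint bigOr (x : form) (l : list form) : form :=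
  match l with
  | [] => x
  | y :: l' => Or x (bigOr y l')
  end.

Definition seq_deriv (G D : form -> Prop) : Prop :=
  exists (x : form) (l : list form),
    (forall y, In y (x :: l) -> D y) /\ deriv G (bigOr x l).

Definition maximal (GD : (form -> Prop) * (form -> Prop)) : Prop :=
  ~ seq_deriv (fst GD) (snd GD) /\ (forall p, fst GD p \/ snd GD p).

Record model : Type := Model {
  W  : Type;
  le : W -> W -> Prop;
  R  : W -> (W -> Prop) * (W -> Prop) -> W -> Prop;
  Vp : nat -> W -> Prop;
  Vm : nat -> W -> Prop
}.

Fixpoint ver (M : model) (p : form) (w : W M) {struct p} : Prop :=
  match p with
  | Var n => Vp M n w
  | And a b => ver M a w /\ ver M b w
  | Or a b => ver M a w \/ ver M b w
  | Imp a b => forall v, le M w v -> ver M a v -> ver M b v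
  | Neg a => fal M a w
  | Cond a b => forall v, le M w v ->
                forall u, R M v (ver M a, fal M a) u -> ver M b u
  end
with fal (M : model) (p : form) (w : W M) {struct p} : Prop :=
  match p with
  | Var n => Vm M n w
  | And a b => fal M a w \/ fal M b w
  | Or a b => fal M a w /\ fal M b w
  | Imp a b => ver M a w /\ fal M b w
  | Neg a => ver M a w
  | Cond a b => exists u, R M w (ver M a, fal M a) u /\ fal M b u
  end.

Definition Wc : Type := { GD : (form -> Prop) * (form -> Prop) | maximal GD }.

Definition Gam (w : Wc) : form -> Prop := fst (proj1_sig w).

Definition lec (w v : Wc) : Prop := forall p, Gam w p -> Gam v p.

(* set equality X = {w | ...} rendered extensionally (pointwise iff) *)
Definition Rc (w0 : Wc) (XY : (Wc -> Prop) * (Wc -> Prop)) (w1 : Wc) : Prop :=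
  exists p : form,
    (forall w, fst XY w <-> Gam w p) /\
    (forall w, snd XY w <-> Gam w (Neg p)) /\
    (forall q, Gam w0 (Cond p q) -> Gam w1 q) /\
    (forall q, Gam w1 (Neg q) -> Gam w0 (Neg (Cond p q))).

Definition Mc : model :=
  Model Wc lec Rc (fun n w => Gam w (Var n)) (fun n w => Gam w (Neg (Var n))).

(* Main.v *)
Require Import Defs.
From Stdlib Require Import List Classical Cantor PeanoNat Lia.
Import ListNotations.

Lemma thm_id p : thm (Imp p p).
Proof.
  eapply r_MP. eapply r_MP. apply (ax_S p (Imp p p) p). apply ax_K. apply ax_K.
Qed.

Lemma deriv_mono (G G' : form -> Prop) p : deriv G p -> (forall x, G x -> G' x) -> deriv G' p.
Proof. intros H S; induction H; [apply d_hyp; auto| apply d_thm; auto| eapply d_mp; eauto]. Qed.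

Lemma deduction G h X : deriv (fun p => G p \/ p = h) X -> deriv G (Imp h X).
Proof.
  intro H; induction H as [p [Hp|Hp]|p Hp|p q _ IH1 _ IH2].
  - eapply d_mp. apply d_thm, ax_K. apply d_hyp; auto.
  - subst. apply d_thm, thm_id.
  - eapply d_mp. apply d_thm, ax_K. apply d_thm; auto.
  - eapply d_mp. eapply d_mp. apply d_thm, ax_S. exact IH1. exact IH2.
Qed.

Lemma deriv_empty X : deriv (fun _ => False) X -> thm X.
Proof. intro H; induction H; [contradiction| auto| eapply r_MP; eauto]. Qed.

Lemma dthm G p : thm p -> deriv G p. Proof. apply d_thm. Qed.

Lemma dmp G p q : deriv G (Imp p q) -> deriv G p -> deriv G q. Proof. apply d_mp. Qed.

Lemma thm_of_deriv1 a b : deriv (fun p => p = a) b -> thm (Imp a b).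
Proof.
  intro H. apply deriv_empty, deduction. eapply deriv_mono; [exact H|]. intros; auto.
Qed.

Lemma thm_of_deriv2 a b c : deriv (fun p => p = a \/ p = b) c -> thm (Imp a (Imp b c)).
Proof.
  intro H. apply deriv_empty, deduction, deduction. eapply deriv_mono; [exact H|].
  intros x [->| ->]; auto.
Qed.

Lemma hyp_in G p : G p -> deriv G p. Proof. apply d_hyp. Qed.

Lemma dand G p q : deriv G p -> deriv G q -> deriv G (And p q).
Proof. intros. eapply dmp; [eapply dmp; [apply dthm, ax_A3|]|]; eauto. Qed.
Lemma dand1 G p q : deriv G (And p q) -> deriv G p.
Proof. intros. eapply dmp; [apply dthm, ax_A1|]; eauto. Qed.
Lemma dand2 G p q : deriv G (And p q) -> deriv G q.
Proof. intros. eapply dmp; [apply dthm, ax_A2|]; eauto. Qed.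
Lemma dor1 G p q : deriv G p -> deriv G (Or p q).
Proof. intros. eapply dmp; [apply dthm, ax_O1|]; eauto. Qed.
Lemma dor2 G p q : deriv G q -> deriv G (Or p q).
Proof. intros. eapply dmp; [apply dthm, ax_O2|]; eauto. Qed.
Lemma dorE G p q r : deriv G (Imp p r) -> deriv G (Imp q r) -> deriv G (Or p q) -> deriv G r.
Proof. intros H1 H2 H3. eapply dmp; [|exact H3]. eapply dmp; [|exact H2]. eapply dmp; [apply dthm, ax_O3|exact H1]. Qed.
Lemma thm_and1 p q : thm (And p q) -> thm p.
Proof. intros. eapply r_MP; [apply ax_A1|]; eauto. Qed.
Lemma thm_and2 p q : thm (And p q) -> thm q.
Proof. intros. eapply r_MP; [apply ax_A2|]; eauto. Qed.
Lemma thm_and p q : thm p -> thm q -> thm (And p q).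
Proof. intros. eapply r_MP; [eapply r_MP; [apply ax_A3|]|]; eauto. Qed.
Lemma thm_trans a b c : thm (Imp a b) -> thm (Imp b c) -> thm (Imp a c).
Proof.
  intros H1 H2. apply thm_of_deriv1. eapply dmp. apply dthm, H2.
  eapply dmp. apply dthm, H1. apply hyp_in; auto.
Qed.

Lemma bigOr_in z x l : In z (x::l) -> thm (Imp z (bigOr x l)).
Proof.
  revert x; induction l as [|y l IH]; intros x Hin; simpl in *.
  - destruct Hin as [->|[]]. apply thm_id.
  - destruct Hin as [->|Hin]. apply ax_O1.
    eapply thm_trans. apply IH; exact Hin. apply ax_O2.
Qed.

Lemma bigOr_incl x l y m : (forall z, In z (x::l) -> In z (y::m)) ->
  thm (Imp (bigOr x l) (bigOr y m)).
Proof.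
  revert x; induction l as [|z l IH]; intros x Hs; simpl.
  - apply bigOr_in. apply Hs; simpl; auto.
  - apply thm_of_deriv1. eapply dorE; [| |apply hyp_in; reflexivity].
    + apply dthm, bigOr_in, Hs; simpl; auto.
    + apply dthm, IH. intros w Hw. apply Hs. simpl in *; tauto.
Qed.

Lemma seq_deriv_mono (G G' D D' : form -> Prop) :
  seq_deriv G D -> (forall x, G x -> G' x) -> (forall x, D x -> D' x) -> seq_deriv G' D'.
Proof.
  intros [x [l [H1 H2]]] HG HD. exists x, l. split; [intros; auto| eapply deriv_mono; eauto].
Qed.

Lemma seq_single G b : seq_deriv G (fun y => y = b) -> deriv G b.
Proof.
  intros [x [l [H1 H2]]]. eapply dmp; [|exact H2]. apply dthm.
  apply (bigOr_incl x l b []). intros z Hz. apply H1 in Hz. subst; simpl; auto.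
Qed.

Fixpoint dec (f n : nat) : form :=
  match f with
  | 0 => Var 0
  | S f =>
    match of_nat n with
    | (0, m) => Var m
    | (1, m) => let (x, y) := of_nat m in And (dec f x) (dec f y)
    | (2, m) => let (x, y) := of_nat m in Or (dec f x) (dec f y)
    | (3, m) => let (x, y) := of_nat m in Imp (dec f x) (dec f y)
    | (4, m) => Neg (dec f m)
    | (5, m) => let (x, y) := of_nat m in Cond (dec f x) (dec f y)
    | _ => Var 0
    end
  end.

Lemma dec_surj p : exists n f0, forall f, f0 <= f -> dec f n = p.
Proof.
  induction p as [m|a [n1 [f1 H1]] b [n2 [f2 H2]]|a [n1 [f1 H1]] b [n2 [f2 H2]]
                 |a [n1 [f1 H1]] b [n2 [f2 H2]]|a [n1 [f1 H1]]|a [n1 [f1 H1]] b [n2 [f2 H2]]].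
  - exists (to_nat (0, m)), 1. intros [|f] Hf; [lia|]. cbn [dec]. rewrite cancel_of_to. reflexivity.
  - exists (to_nat (1, to_nat (n1, n2))), (S (max f1 f2)). intros [|f] Hf; [lia|]. cbn [dec].
    rewrite !cancel_of_to. rewrite H1, H2 by lia. reflexivity.
  - exists (to_nat (2, to_nat (n1, n2))), (S (max f1 f2)). intros [|f] Hf; [lia|]. cbn [dec].
    rewrite !cancel_of_to. rewrite H1, H2 by lia. reflexivity.
  - exists (to_nat (3, to_nat (n1, n2))), (S (max f1 f2)). intros [|f] Hf; [lia|]. cbn [dec].
    rewrite !cancel_of_to. rewrite H1, H2 by lia. reflexivity.
  - exists (to_nat (4, n1)), (S f1). intros [|f] Hf; [lia|]. cbn [dec].
    rewrite !cancel_of_to. rewrite H1 by lia. reflexivity.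
  - exists (to_nat (5, to_nat (n1, n2))), (S (max f1 f2)). intros [|f] Hf; [lia|]. cbn [dec].
    rewrite !cancel_of_to. rewrite H1, H2 by lia. reflexivity.
Qed.

Definition enum (k : nat) : form := let (n, f) := of_nat k in dec f n.

Lemma enum_surj p : exists k, enum k = p.
Proof.
  destruct (dec_surj p) as [n [f0 H]]. exists (to_nat (n, f0)). unfold enum.
  rewrite cancel_of_to. apply H; lia.
Qed.

Lemma dtrans G a b c : deriv G (Imp a b) -> deriv G (Imp b c) -> deriv G (Imp a c).
Proof.
  intros H1 H2. apply deduction. eapply dmp. eapply deriv_mono; [exact H2|]; auto.
  eapply dmp. eapply deriv_mono; [exact H1|]; auto. apply hyp_in; auto.
Qed.

Lemma dorI G a b c : deriv G (Imp a c) -> deriv G (Imp b c) -> deriv G (Imp (Or a b) c).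
Proof. intros. eapply dmp; [eapply dmp; [apply dthm, ax_O3|]|]; eauto. Qed.

Lemma incl_lift G A x l k1 k2 :
  deriv G (Imp A (bigOr x (l ++ k1))) -> deriv G (Imp A (bigOr x (l ++ k1 ++ k2))).
Proof.
  intro H. eapply dtrans; [exact H|]. apply dthm, bigOr_incl.
  intros z Hz. simpl in *. rewrite !in_app_iff in *. tauto.
Qed.

Lemma incl_lift2 G A x l k1 k2 :
  deriv G (Imp A (bigOr x (l ++ k2))) -> deriv G (Imp A (bigOr x (l ++ k1 ++ k2))).
Proof.
  intro H. eapply dtrans; [exact H|]. apply dthm, bigOr_incl.
  intros z Hz. simpl in *. rewrite !in_app_iff in *. tauto.
Qed.

Lemma cut_lemma (G D : form -> Prop) e :
  seq_deriv (fun q => G q \/ q = e) D -> seq_deriv G (fun p => D p \/ p = e) -> seq_deriv G D.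
Proof.
  intros [x [l [Hxl Hd]]] [y [m [Hym Hd2]]].
  apply deduction in Hd.
  assert (single : forall y, D y \/ y = e -> exists k, (forall z, In z k -> D z) /\
            deriv G (Imp y (bigOr x (l ++ k)))).
  { intros y0 [Hy0| ->].
    - exists [y0]. split. intros z [->|[]]; auto.
      apply dthm, bigOr_in. simpl. rewrite in_app_iff. simpl; auto.
    - exists []. split. intros z []. rewrite app_nil_r. exact Hd. }
  assert (forall m y, (forall z, In z (y::m) -> D z \/ z = e) -> exists k,
            (forall z, In z k -> D z) /\ deriv G (Imp (bigOr y m) (bigOr x (l ++ k)))).
  { clear Hym Hd2 y m. induction m as [|z m IH]; intros y Hs.
    - apply single, Hs; simpl; auto.
    - destruct (single y) as [k1 [Hk1 H1]]. apply Hs; simpl; auto.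
      destruct (IH z) as [k2 [Hk2 H2]]. intros; apply Hs; simpl in *; tauto.
      exists (k1 ++ k2). split. intros w Hw; apply in_app_iff in Hw; destruct Hw; auto.
      simpl. apply dorI. apply incl_lift; auto. apply incl_lift2; auto. }
  destruct (H m y Hym) as [k [Hk Hd3]].
  exists x, (l ++ k). split.
  - intros z Hz. simpl in Hz. destruct Hz as [<-|Hz]. apply Hxl; simpl; auto.
    apply in_app_iff in Hz. destruct Hz; auto. apply Hxl; simpl; auto.
  - eapply dmp; eauto.
Qed.

Fixpoint stage (G0 D0 : form -> Prop) (n : nat) : (form -> Prop) * (form -> Prop) :=
  match n with
  | 0 => (G0, D0)
  | S n => let s := stage G0 D0 n in
     (fun p => fst s p \/ (p = enum n /\ ~ seq_deriv (fun q => fst s q \/ q = enum n) (snd s)),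
      fun p => snd s p \/ (p = enum n /\ seq_deriv (fun q => fst s q \/ q = enum n) (snd s)))
  end.

Lemma stage_cons G0 D0 n : ~ seq_deriv G0 D0 -> ~ seq_deriv (fst (stage G0 D0 n)) (snd (stage G0 D0 n)).
Proof.
  intro H0; induction n as [|n IH]; simpl; auto.
  set (s := stage G0 D0 n) in *.
  destruct (classic (seq_deriv (fun q => fst s q \/ q = enum n) (snd s))) as [Hc|Hc].
  - intro Hs. apply IH. apply (cut_lemma _ _ (enum n) Hc).
    eapply seq_deriv_mono; [exact Hs| |].
    + intros x [Hx|[_ Hx]]; tauto.
    + intros x [Hx|[Hx _]]; auto.
  - intro Hs. apply Hc. eapply seq_deriv_mono; [exact Hs| |].
    + intros x [Hx|[Hx _]]; auto.
    + intros x [Hx|[_ Hx]]; tauto.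
Qed.

Lemma stage_mono G0 D0 n m : n <= m ->
  (forall p, fst (stage G0 D0 n) p -> fst (stage G0 D0 m) p) /\
  (forall p, snd (stage G0 D0 n) p -> snd (stage G0 D0 m) p).
Proof.
  induction 1 as [|m _ [IH1 IH2]]; [split; auto|]. simpl. split; intros; left; auto.
Qed.

Lemma deriv_compact (G0 D0 : form -> Prop) p :
  deriv (fun q => exists n, fst (stage G0 D0 n) q) p -> exists n, deriv (fst (stage G0 D0 n)) p.
Proof.
  induction 1 as [p [n Hn]|p Hp|p q _ [n1 H1] _ [n2 H2]].
  - exists n; apply hyp_in; auto.
  - exists 0; apply dthm; auto.
  - exists (max n1 n2). eapply dmp.
    + eapply deriv_mono; [exact H1|]. apply (stage_mono G0 D0 n1 (max n1 n2)); lia.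
    + eapply deriv_mono; [exact H2|]. apply (stage_mono G0 D0 n2 (max n1 n2)); lia.
Qed.

Lemma list_compact (G0 D0 : form -> Prop) (l : list form) :
  (forall y, In y l -> exists n, snd (stage G0 D0 n) y) ->
  exists n, forall y, In y l -> snd (stage G0 D0 n) y.
Proof.
  induction l as [|a l IH]; intros H.
  - exists 0; intros y [].
  - destruct IH as [n1 H1]. intros; apply H; simpl; auto.
    destruct (H a) as [n2 H2]; simpl; auto.
    exists (max n1 n2). intros y [<-|Hy].
    + apply (stage_mono G0 D0 n2); [lia|auto].
    + apply (stage_mono G0 D0 n1); [lia|auto].
Qed.

Lemma lindenbaum (G0 D0 : form -> Prop) : ~ seq_deriv G0 D0 ->
  exists w : Wc, (forall p, G0 p -> Gam w p) /\ (forall p, D0 p -> snd (proj1_sig w) p).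
Proof.
  intro H0.
  set (G := fun q => exists n, fst (stage G0 D0 n) q).
  set (D := fun q => exists n, snd (stage G0 D0 n) q).
  assert (Hm : maximal (G, D)).
  { split; simpl.
    - intros [x [l [Hs Hd]]]. destruct (deriv_compact G0 D0 _ Hd) as [n1 H1].
      destruct (list_compact G0 D0 (x :: l) Hs) as [n2 H2].
      apply (stage_cons G0 D0 (max n1 n2) H0). exists x, l. split.
      + intros y Hy. apply (stage_mono G0 D0 n2); [lia|auto].
      + eapply deriv_mono; [exact H1|]. apply stage_mono; lia.
    - intro p. destruct (enum_surj p) as [k <-].
      destruct (classic (seq_deriv (fun q => fst (stage G0 D0 k) q \/ q = enum k) (snd (stage G0 D0 k)))) as [Hc|Hc].
      + right. exists (S k). simpl. auto.
      + left. exists (S k). simpl. auto. }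
  exists (exist _ (G, D) Hm). split; intros p Hp; exists 0; exact Hp.
Qed.

Definition Dl (w : Wc) : form -> Prop := snd (proj1_sig w).

Lemma w_max (w : Wc) : ~ seq_deriv (Gam w) (Dl w) /\ (forall p, Gam w p \/ Dl w p).
Proof. destruct w as [[G D] [H1 H2]]. exact (conj H1 H2). Qed.

Lemma w_disj w p : Gam w p -> Dl w p -> False.
Proof.
  intros H1 H2. apply (proj1 (w_max w)). exists p, []. split.
  intros y [<-|[]]; auto. apply hyp_in; auto.
Qed.

Lemma w_notG w p : ~ Gam w p -> Dl w p.
Proof. intro H. destruct (proj2 (w_max w) p); tauto. Qed.

Lemma w_closed w p : deriv (Gam w) p -> Gam w p.
Proof.
  intro H. apply NNPP. intro Hn. apply (proj1 (w_max w)). exists p, [].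
  split; auto. intros y [<-|[]]. apply w_notG; auto.
Qed.

Lemma w_thm w p : thm p -> Gam w p.
Proof. intro; apply w_closed, dthm; auto. Qed.

Lemma w_mp w a b : thm (Imp a b) -> Gam w a -> Gam w b.
Proof. intros; apply w_closed. eapply dmp; [apply dthm; eauto| apply hyp_in; auto]. Qed.

Lemma w_mp2 w a b : Gam w (Imp a b) -> Gam w a -> Gam w b.
Proof. intros; apply w_closed. eapply dmp; apply hyp_in; eauto. Qed.

Lemma w_prime w a b : Gam w (Or a b) -> Gam w a \/ Gam w b.
Proof.
  intro H. apply NNPP. intro Hn. apply (proj1 (w_max w)). exists a, [b]. split.
  - intros y [<-|[<-|[]]]; apply w_notG; tauto.
  - apply hyp_in; auto.
Qed.

Lemma w_and w a b : Gam w (And a b) <-> Gam w a /\ Gam w b.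
Proof.
  split. intro; split; eapply w_mp; eauto; [apply ax_A1|apply ax_A2].
  intros [H1 H2]. apply w_closed, dand; apply hyp_in; auto.
Qed.

Lemma w_or w a b : Gam w (Or a b) <-> Gam w a \/ Gam w b.
Proof.
  split. apply w_prime. intros [H|H]; eapply w_mp; eauto; [apply ax_O1|apply ax_O2].
Qed.

Lemma thm_iff1 a b : thm (Iff a b) -> thm (Imp a b).
Proof. apply thm_and1. Qed.
Lemma thm_iff2 a b : thm (Iff a b) -> thm (Imp b a).
Proof. apply thm_and2. Qed.

Lemma w_iff w a b : thm (Iff a b) -> (Gam w a <-> Gam w b).
Proof. intro H; split; apply w_mp; [apply thm_iff1|apply thm_iff2]; auto. Qed.

Lemma mk_iff a b : thm (Imp a b) -> thm (Imp b a) -> thm (Iff a b).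
Proof. apply thm_and. Qed.

Lemma C1_fwd a q r : thm (Imp (And (Cond a q) (Cond a r)) (Cond a (And q r))).
Proof. exact (thm_and1 _ _ (thm_and1 _ _ (ax_C1 a q r))). Qed.
Lemma C1_bwd a q r : thm (Imp (Cond a (And q r)) (And (Cond a q) (Cond a r))).
Proof. exact (thm_and1 _ _ (thm_and2 _ _ (ax_C1 a q r))). Qed.
Lemma C1_neg a q r : thm (Imp (Neg (And (Cond a q) (Cond a r))) (Neg (Cond a (And q r)))).
Proof. exact (thm_and2 _ _ (thm_and2 _ _ (ax_C1 a q r))). Qed.
Lemma C1_neg' a q r : thm (Imp (Neg (Cond a (And q r))) (Neg (And (Cond a q) (Cond a r)))).
Proof. exact (thm_and2 _ _ (thm_and1 _ _ (ax_C1 a q r))). Qed.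

Lemma cond_mono a q r : thm (Imp q r) -> thm (Imp (Cond a q) (Cond a r)).
Proof.
  intro H.
  assert (Hi : thm (Iff q (And q r))).
  { apply mk_iff; [|apply ax_A1]. apply thm_of_deriv1. apply dand. apply hyp_in; auto.
    eapply dmp. apply dthm, H. apply hyp_in; auto. }
  apply (r_RC _ _ a) in Hi. apply thm_iff1 in Hi.
  eapply thm_trans; [exact Hi|]. eapply thm_trans; [apply C1_bwd|apply ax_A2].
Qed.

Lemma neg_mono a X Y : thm (Imp (Neg X) (Neg Y)) ->
  thm (Imp (Neg (Cond a X)) (Neg (Cond a Y))).
Proof.
  intro H.
  assert (Hi : thm (Iff (Neg (And X Y)) (Neg Y))).
  { apply mk_iff.
    - apply thm_of_deriv1. eapply dorE; [apply dthm, H|apply dthm, thm_id|].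
      eapply dmp; [apply dthm, thm_iff1, ax_NAnd|apply hyp_in; auto].
    - eapply thm_trans; [apply ax_O2|apply thm_iff2, ax_NAnd]. }
  apply (r_RCN _ _ a) in Hi. apply thm_iff1 in Hi.
  eapply thm_trans; [|exact Hi]. eapply thm_trans; [|apply C1_neg].
  eapply thm_trans; [apply ax_O1|apply thm_iff2, ax_NAnd].
Qed.

Lemma dia_conv a q : thm (Imp (Dia a (Neg q)) (Neg (Cond a q))).
Proof.
  unfold Dia. apply thm_iff2. apply r_RCN. apply mk_iff.
  - apply thm_iff2, ax_NN.
  - apply thm_iff1, ax_NN.
Qed.

Lemma w_cond_mono w a q r : thm (Imp q r) -> Gam w (Cond a q) -> Gam w (Cond a r).
Proof. intro; apply w_mp, cond_mono; auto. Qed.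

Lemma w_neg_mono w a X Y : thm (Imp (Neg X) (Neg Y)) ->
  Gam w (Neg (Cond a X)) -> Gam w (Neg (Cond a Y)).
Proof. intro; apply w_mp, neg_mono; auto. Qed.

Lemma cond_closed w a X : deriv (fun q => Gam w (Cond a q)) X -> Gam w (Cond a X).
Proof.
  induction 1 as [p Hp|p Hp|p q _ IH1 _ IH2]; auto.
  - apply (w_cond_mono w a (Imp p p)). eapply r_MP; [apply ax_K|exact Hp].
    apply w_thm, ax_C4.
  - apply (w_cond_mono w a (And (Imp p q) p)).
    + apply thm_of_deriv1. eapply dmp. eapply dand1. apply hyp_in; reflexivity.
      eapply dand2; apply hyp_in; reflexivity.
    + eapply w_mp; [apply C1_fwd|]. apply w_and; auto.
Qed.

Lemma valid_imp x y : (forall w : Wc, Gam w x -> Gam w y) -> thm (Imp x y).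
Proof.
  intro H. apply NNPP; intro Hn.
  assert (Hc : ~ seq_deriv (fun p => p = x) (fun p => p = y)).
  { intro Hs. apply seq_single in Hs. apply Hn, thm_of_deriv1, Hs. }
  destruct (lindenbaum _ _ Hc) as [w [H1 H2]].
  apply (w_disj w y). apply H; auto. apply H2; reflexivity.
Qed.

Definition Rstd (v : Wc) (a : form) (u : Wc) : Prop :=
  (forall q, Gam v (Cond a q) -> Gam u q) /\
  (forall q, Gam u (Neg q) -> Gam v (Neg (Cond a q))).

Lemma Rc_char a : (forall w, ver Mc a w <-> Gam w a) -> (forall w, fal Mc a w <-> Gam w (Neg a)) ->
  forall v u, Rc v (ver Mc a, fal Mc a) u <-> Rstd v a u.
Proof.
  intros Hv Hf v u. split.
  - intros [p [H1 [H2 [H3 H4]]]]. simpl in H1, H2.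
    assert (HS : thm (SIff a p)).
    { unfold SIff, SImp. repeat apply thm_and; apply valid_imp; intros w0 Hw0.
      - apply H1, Hv; auto.
      - apply Hf, H2; auto.
      - apply Hv, H1; auto.
      - apply H2, Hf; auto. }
    split.
    + intros q Hq. apply H3. eapply w_mp; [|exact Hq].
      exact (thm_and1 _ _ (thm_and1 _ _ (r_RA _ _ q HS))).
    + intros q Hq. eapply w_mp; [|apply H4; exact Hq].
      exact (thm_and2 _ _ (thm_and1 _ _ (r_RA _ _ q HS))).
  - intros [H1 H2]. exists a. simpl. split; [|split]; auto.
Qed.

Lemma set_compact (G N : form -> Prop) X : deriv (fun p => G p \/ N p) X ->
  exists hs, (forall h, In h hs -> N h) /\ deriv (fun p => G p \/ In p hs) X.
Proof.
  induction 1 as [p [Hp|Hp]|p Hp|p q _ [h1 [Hh1 D1]] _ [h2 [Hh2 D2]]].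
  - exists []. split. intros _ []. apply hyp_in; auto.
  - exists [p]. split. intros h [<-|[]]; auto. apply hyp_in; simpl; auto.
  - exists []. split. intros _ []. apply dthm; auto.
  - exists (h1 ++ h2). split. intros h Hh; apply in_app_iff in Hh; destruct Hh; auto.
    eapply dmp.
    + eapply deriv_mono; [exact D1|]. intros x [Hx|Hx]; [left|right]; auto. apply in_app_iff; auto.
    + eapply deriv_mono; [exact D2|]. intros x [Hx|Hx]; [left|right]; auto. apply in_app_iff; auto.
Qed.

Lemma hs_lemma (w u : Wc) a : (forall q, Gam w (Cond a q) -> Gam u q) ->
  forall hs, (forall h, In h hs -> exists q, h = Neg (Cond a q) /\ Gam u (Neg q)) ->
  forall R, deriv (fun p => Gam w p \/ In p hs) (Cond a R) -> Gam u R.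
Proof.
  intros Hu hs. induction hs as [|h hs IH]; intros Hh R Hd.
  - apply Hu, w_closed. eapply deriv_mono; [exact Hd|]. intros x [Hx|[]]; auto.
  - destruct (Hh h) as [q [-> Hq]]; [simpl; auto|].
    assert (Hd2 : deriv (fun p => (Gam w p \/ In p hs) \/ p = Neg (Cond a q)) (Cond a R)).
    { eapply deriv_mono; [exact Hd|]. intros x [Hx|[Hx|Hx]]; auto. }
    apply deduction in Hd2.
    assert (Hd3 : deriv (fun p => Gam w p \/ In p hs) (Cond a (Imp (Neg q) R))).
    { eapply dmp. apply dthm, ax_C3. eapply dtrans; [apply dthm, dia_conv|exact Hd2]. }
    apply IH in Hd3; [|intros; apply Hh; simpl; auto].
    eapply w_mp2; eauto.
Qed.

Lemma ver_witness (w : Wc) a b : ~ Gam w (Cond a b) ->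
  exists v u, lec w v /\ Rstd v a u /\ ~ Gam u b.
Proof.
  intro Hn.
  assert (Hc : ~ seq_deriv (fun q => Gam w (Cond a q)) (fun p => p = b)).
  { intro Hs. apply seq_single, cond_closed in Hs. auto. }
  destruct (lindenbaum _ _ Hc) as [u [Hu1 Hu2]].
  set (N := fun h => exists q, h = Neg (Cond a q) /\ Gam u (Neg q)).
  set (Dv := fun y => exists r, y = Cond a r /\ ~ Gam u r).
  assert (Hl : forall l x, (forall y, In y (x :: l) -> Dv y) ->
             exists R, ~ Gam u R /\ thm (Imp (bigOr x l) (Cond a R))).
  { induction l as [|z l IH]; intros x Hs.
    - destruct (Hs x) as [r [-> Hr]]; [simpl; auto|]. exists r. split; auto. apply thm_id.
    - destruct (Hs x) as [r [-> Hr]]; [simpl; auto|].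
      destruct (IH z) as [R [HR HRt]]. intros; apply Hs; simpl in *; tauto.
      exists (Or r R). split.
      + intro HH. apply w_prime in HH. tauto.
      + simpl. apply deriv_empty. apply dorI.
        * apply dthm, cond_mono, ax_O1.
        * eapply dtrans. apply dthm, HRt. apply dthm, cond_mono, ax_O2. }
  assert (Hc2 : ~ seq_deriv (fun p => Gam w p \/ N p) Dv).
  { intros [x [l [Hs Hd]]]. destruct (Hl l x Hs) as [R [HR HRt]].
    assert (Hd2 : deriv (fun p => Gam w p \/ N p) (Cond a R)) by (eapply dmp; [apply dthm, HRt|exact Hd]).
    destruct (set_compact _ _ _ Hd2) as [hs [Hhs Hd3]].
    apply HR. eapply hs_lemma; eauto. }
  destruct (lindenbaum _ _ Hc2) as [v [Hv1 Hv2]].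
  exists v, u. split; [|split].
  - intros p Hp. apply Hv1; auto.
  - split.
    + intros q Hq. apply NNPP. intro Hq'. apply (w_disj v (Cond a q)); auto.
      apply Hv2. exists q; auto.
    + intros q Hq. apply Hv1. right. exists q; auto.
  - intro Hb. apply (w_disj u b); auto. apply Hu2; reflexivity.
Qed.

Lemma fal_witness (w : Wc) a b : Gam w (Neg (Cond a b)) ->
  exists u, Rstd w a u /\ Gam u (Neg b).
Proof.
  intro Hnb.
  set (D0 := fun y => exists q, y = Neg q /\ ~ Gam w (Neg (Cond a q))).
  assert (Hl : forall l x, (forall y, In y (x :: l) -> D0 y) ->
             exists Q, ~ Gam w (Neg (Cond a Q)) /\ thm (Imp (bigOr x l) (Neg Q))).
  { induction l as [|z l IH]; intros x Hs.
    - destruct (Hs x) as [q [-> Hq]]; [simpl; auto|]. exists q. split; auto. apply thm_id.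
    - destruct (Hs x) as [q [-> Hq]]; [simpl; auto|].
      destruct (IH z) as [Q [HQ HQt]]. intros; apply Hs; simpl in *; tauto.
      exists (And q Q). split.
      + intro HH. eapply w_mp in HH; [|apply C1_neg'].
        eapply w_mp in HH; [|apply thm_iff1, ax_NAnd]. apply w_prime in HH. tauto.
      + simpl. eapply thm_trans; [|apply thm_iff2, ax_NAnd]. apply deriv_empty. apply dorI.
        * apply dthm, ax_O1.
        * eapply dtrans. apply dthm, HQt. apply dthm, ax_O2. }
  assert (Hc : ~ seq_deriv (fun p => Gam w (Cond a p) \/ p = Neg b) D0).
  { intros [x [l [Hs Hd]]]. destruct (Hl l x Hs) as [Q [HQ HQt]].
    assert (Hd2 : deriv (fun p => Gam w (Cond a p) \/ p = Neg b) (Neg Q)) by (eapply dmp; [apply dthm, HQt|exact Hd]).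
    apply deduction, cond_closed in Hd2.
    apply HQ. eapply w_neg_mono.
    2:{ eapply w_mp. apply ax_C2. apply w_and. split; [exact Hnb|exact Hd2]. }
    apply thm_of_deriv1.
    assert (HA : deriv (fun p => p = Neg (Or b (Neg (Imp (Neg b) (Neg Q)))))
                   (And (Neg b) (Neg (Neg (Imp (Neg b) (Neg Q)))))).
    { eapply dmp. apply dthm, thm_iff1, ax_NOr. apply hyp_in; auto. }
    eapply dmp. eapply dmp. apply dthm, thm_iff1, ax_NN. eapply dand2; exact HA.
    eapply dand1; exact HA. }
  destruct (lindenbaum _ _ Hc) as [u [Hu1 Hu2]].
  exists u. split; [split|].
  - intros q Hq; apply Hu1; auto.
  - intros q Hq. apply NNPP. intro Hq'. apply (w_disj u (Neg q)); auto.
    apply Hu2. exists q; auto.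
  - apply Hu1; auto.
Qed.

Theorem lemma11 : forall (p : form) (w : W Mc),
  (ver Mc p w <-> Gam w p) /\ (fal Mc p w <-> Gam w (Neg p)).
Proof.
  induction p as [n|a IHa b IHb|a IHa b IHb|a IHa b IHb|a IHa|a IHa b IHb]; intro w; simpl.
  - split; tauto.
  - rewrite (proj1 (IHa w)), (proj1 (IHb w)), (proj2 (IHa w)), (proj2 (IHb w)).
    split. symmetry; apply w_and.
    rewrite (w_iff w _ _ (ax_NAnd a b)). symmetry; apply w_or.
  - rewrite (proj1 (IHa w)), (proj1 (IHb w)), (proj2 (IHa w)), (proj2 (IHb w)).
    split. symmetry; apply w_or.
    rewrite (w_iff w _ _ (ax_NOr a b)). symmetry; apply w_and.
  - split.
    + split.
      * intro H. apply NNPP. intro Hn.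
        assert (Hc : ~ seq_deriv (fun q => Gam w q \/ q = a) (fun q => q = b)).
        { intro Hs. apply seq_single, deduction, w_closed in Hs. auto. }
        destruct (lindenbaum _ _ Hc) as [v [Hv1 Hv2]].
        apply (w_disj v b); [|apply Hv2; auto].
        apply (proj1 (IHb v)), H. intros q Hq; apply Hv1; auto.
        apply (proj1 (IHa v)), Hv1; auto.
      * intros H v Hwv Ha. apply (proj1 (IHb v)). apply (proj1 (IHa v)) in Ha.
        eapply w_mp2; [apply Hwv, H| exact Ha].
    + rewrite (proj1 (IHa w)), (proj2 (IHb w)), (w_iff w _ _ (ax_NImp a b)).
      symmetry; apply w_and.
  - rewrite (proj1 (IHa w)), (proj2 (IHa w)), (w_iff w _ _ (ax_NN a)). tauto.
  - assert (HR := Rc_char a (fun w => proj1 (IHa w)) (fun w => proj2 (IHa w))).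
    split.
    + split.
      * intro H. apply NNPP. intro Hn.
        destruct (ver_witness w a b Hn) as [v [u [Hwv [Hr Hu]]]].
        apply Hu, (proj1 (IHb u)). apply (H v Hwv u). apply HR; auto.
      * intros H v Hwv u Hr. apply (proj1 (IHb u)). apply HR in Hr.
        apply (proj1 Hr). apply Hwv; auto.
    + split.
      * intros [u [Hr Hf]]. apply HR in Hr. apply (proj2 Hr). apply (proj2 (IHb u)); auto.
      * intro H. destruct (fal_witness w a b H) as [u [Hr Hu]].
        exists u. split. apply HR; auto. apply (proj2 (IHb u)); auto.
Qed.
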